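(* Let $S$ be a poset and let $S\otimes_i G_i$ and $S\otimes_i H_i$ be terminating ordered joins in the same shape $S$. Suppose $i_0\in S$ is a maximal element of $S$ and $G_i=H_i$ for all $i\neq i_0$. If $G_{i_0}\simeq_0 H_{i_0}$, then $S\otimes_i G_i \simeq_0 S\otimes_i H_i$.
   Context: All games are impartial combinatorial games under normal play; a game is determined by its set of options, and $G \to G'$ means $G'$ is an option of $G$. A game is terminating if it admits no infinite sequence of moves. $\mathbf{0}$ denotes the game with no options. The Grundy number of a terminating game $G$ is the ordinal $\Gamma_0(G)=\operatorname{mex}\{\Gamma_0(G') : G\to G'\}$, where $\operatorname{mex}\Lambda$ is the least ordinal not in the set of ordinals $\Lambda$. Games $G,H$ are $0$-equivalent, $G\simeq_0 H$, if $\Gamma_0(G)=\Gamma_0(H)$. Ordered join: for a poset $S$ and a family $(G_i)_{i\in S}$ of games, $S \otimes_i G_i$ is the game whose options are exactly the ordered joins $S \otimes_i G'_i$ obtained by choosing one $i_0\in S$ and an option $G_{i_0}\to G'_{i_0}$, and setting $G'_i=\mathbf{0}$ for all $i>i_0$ and $G'_i=G_i$ for all other $i\ne i_0$. *)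

(* Defs.v *)
From Stdlib Require Import ClassicalEpsilon.
From mathcomp Require Import all_boot all_order.

Unset Strict Implicit.
Unset Printing Implicit Defensive.

(* A (possibly non-terminating) impartial game: a family of options. *)
CoInductive game : Type := Game { gidx : Type ; gopt : gidx -> game }.

Definition is_option (G G' : game) : Prop := exists k : gidx G, gopt G k = G'.

(* A game is determined by its set of options: identity of games is
   (coinductive) extensional equality, i.e. bisimilarity. *)
CoInductive game_eq (G H : game) : Prop :=
  GameEq : (forall k, exists l, game_eq (gopt G k) (gopt H l)) ->
           (forall l, exists k, game_eq (gopt G k) (gopt H l)) ->
           game_eq G H.

Definition gzero : game := @Game Empty_set (fun e => match e with end).

Definition terminating (G : game) : Prop :=
  ~ exists s : nat -> game, s 0 = G /\ forall n, is_option (s n) (s n.+1).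

(* ---------- Ordinals (as well-founded trees compared by rank) ---------- *)
Inductive Ord : Type := OSup { oidx : Type ; oval : oidx -> Ord }.

Fixpoint ole (a b : Ord) {struct a} : Prop :=
  match a, b with
  | OSup _ f, OSup _ g => forall i, exists j, ole (f i) (g j)
  end.

Definition olt (a b : Ord) : Prop :=
  match b with OSup _ g => exists j, ole a (g j) end.

Definition oeq (a b : Ord) : Prop := ole a b /\ ole b a.

Definition ozero : Ord := @OSup Empty_set (fun e => match e with end).

Definition is_mex {I : Type} (f : I -> Ord) (alpha : Ord) : Prop :=
  (forall i, ~ oeq (f i) alpha) /\
  (forall beta, olt beta alpha -> exists i, oeq (f i) beta).

Definition mex {I : Type} (f : I -> Ord) : Ord :=
  epsilon (inhabits ozero) (is_mex f).

Definition opt_rel (G' G : game) : Prop := is_option G G'.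

Definition Gamma0_acc {G : game} (h : Acc opt_rel G) : Ord :=
  Fix_F (fun _ => Ord)
    (fun G rec => mex (fun k : gidx G => rec (gopt G k) (ex_intro _ k erefl))) h.

(* Defined for terminating (well-founded) games; junk value otherwise. *)
Definition Gamma0 (G : game) : Ord :=
  match excluded_middle_informative (Acc opt_rel G) with
  | left h => Gamma0_acc h
  | right _ => ozero
  end.

Definition zero_equiv (G H : game) : Prop := oeq (Gamma0 G) (Gamma0 H).

CoFixpoint ojoin {disp : Order.disp_t} {S : porderType disp} (G : S -> game) : game :=
  @Game {i : S & gidx (G i)}
    (fun p => ojoin (fun j =>
        if (projT1 p < j)%O then gzero
        else if j == projT1 p then gopt (G (projT1 p)) (projT2 p)
        else G j)).

(* Main.v *)
Require Import Defs.
From mathcomp Require Import all_boot all_order.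
From Stdlib Require Import Classical ClassicalEpsilon ProofIrrelevance FunctionalExtensionality Relations Wellfounded.
Import Order.TTheory.

Lemma ole_refl a : ole a a.
Proof. induction a as [I f IH]; simpl; intro i; exists i; apply IH. Qed.

Lemma ole_trans a : forall b c, ole a b -> ole b c -> ole a c.
Proof.
induction a as [I f IH]; intros [J g] [K h]; simpl; intros H1 H2 i.
destruct (H1 i) as [j Hj]; destruct (H2 j) as [k Hk]; exists k; eauto.
Qed.

Lemma olt_ole a : forall b, olt a b -> ole a b.
Proof.
induction a as [J f IH]; intros [K h] [k Hk]; simpl; intro i.
exists k. remember (h k) as c eqn:ec. destruct c as [L g'].
apply IH. simpl in Hk. exact (Hk i).
Qed.

Lemma olt_ole_trans a b c : olt a b -> ole b c -> olt a c.
Proof.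
destruct b as [J g], c as [K h]; simpl; intros [j Hj] H2.
destruct (H2 j) as [k Hk]; exists k; eapply ole_trans; eauto.
Qed.

Lemma ole_olt_trans a b c : ole a b -> olt b c -> olt a c.
Proof. destruct c as [K h]; simpl; intros H1 [k Hk]; exists k; eapply ole_trans; eauto. Qed.

Lemma olt_irrefl a : ~ olt a a.
Proof.
induction a as [I f IH]; simpl; intros [j Hj]. apply (IH j).
remember (f j) as c eqn:ec. destruct c as [L g]. simpl in Hj.
destruct (Hj j) as [m Hm]. simpl. exists m. change (ole (@OSup L g) (g m)). rewrite ec. exact Hm.
Qed.

Lemma tri_aux a : forall b, (olt a b \/ ole b a) /\ (olt b a \/ ole a b).
Proof.
induction a as [I f IHa]; intro b; induction b as [J g IHb].
split.
- destruct (classic (exists j, ole (OSup _ f) (g j))) as [Hx|Hx]; [left; exact Hx|right].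
  simpl; intro j.
  destruct (proj2 (IHb j)) as [Hl|Hl]; [exact Hl| exfalso; apply Hx; eauto].
- destruct (classic (exists i, ole (OSup _ g) (f i))) as [Hx|Hx]; [left; exact Hx|right].
  simpl; intro i. destruct (proj1 (IHa i (OSup _ g))) as [Hl|Hl]; [exact Hl| exfalso; apply Hx; eauto].
Qed.

Lemma ocmp a b : olt a b \/ oeq a b \/ olt b a.
Proof.
destruct (proj1 (tri_aux a b)) as [h|h]; [by left|].
destruct (proj1 (tri_aux b a)) as [h'|h']; [by right; right|].
by right; left; split.
Qed.

Lemma oeq_refl a : oeq a a. Proof. split; apply ole_refl. Qed.
Lemma oeq_sym {a b} : oeq a b -> oeq b a. Proof. by case. Qed.
Lemma oeq_trans {a b c} : oeq a b -> oeq b c -> oeq a c.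
Proof. move=> [h1 h2] [h3 h4]; split; eapply ole_trans; eauto. Qed.
Lemma olt_oeq {a b c} : olt a b -> oeq b c -> olt a c.
Proof. move=> h [h1 _]; eapply olt_ole_trans; eauto. Qed.
Lemma oeq_olt {a b c} : oeq a b -> olt b c -> olt a c.
Proof. move=> [h1 _] h; eapply ole_olt_trans; eauto. Qed.

Lemma mex_exists (I : Type) (f : I -> Ord) : exists a, is_mex f a.
Proof.
pose P := fun i => forall b, olt b (f i) -> exists k, oeq (f k) b.
pose al := OSup _ (fun s : {i | P i} => f (proj1_sig s)).
have Hcov : forall b, olt b al -> exists k, oeq (f k) b.
{ intros b [[s Ps] Hs]. simpl in Hs. destruct (ocmp b (f s)) as [h|[h|h]].
  - exact (Ps b h).
  - exists s; apply oeq_sym, h.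
  - exfalso. apply (olt_irrefl (f s)). eapply olt_ole_trans; eauto. }
exists al; split; [|exact Hcov].
intros k [H1 H2].
have Pk : P k by intros b Hb; apply Hcov; eapply olt_ole_trans; eauto.
apply (olt_irrefl al). eapply ole_olt_trans; [exact H2|].
exists (exist P k Pk). apply ole_refl.
Qed.

Lemma mex_spec (I : Type) (f : I -> Ord) : is_mex f (mex f).
Proof. exact (epsilon_spec _ _ (mex_exists _ f)). Qed.

Lemma mex_unique (I : Type) (f : I -> Ord) a b : is_mex f a -> is_mex f b -> oeq a b.
Proof.
move=> [a1 a2] [b1 b2]. destruct (ocmp a b) as [h|[h|h]]; [|exact h|].
- destruct (b2 a h) as [k hk]. by case: (a1 k).
- destruct (a2 b h) as [k hk]. by case: (b1 k).
Qed.

Lemma Gamma_eq G : Acc opt_rel G -> Gamma0 G = mex (fun k => Gamma0 (gopt G k)).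
Proof.
intro h. unfold Gamma0 at 1. destruct (excluded_middle_informative (Acc opt_rel G)) as [h'|n]; [|contradiction].
destruct h' as [hf]. unfold Gamma0_acc; simpl.
f_equal. apply functional_extensionality_dep; intro k. unfold Gamma0.
destruct (excluded_middle_informative (Acc opt_rel (gopt G k))) as [h2|n2].
- unfold Gamma0_acc. f_equal. apply proof_irrelevance.
- exfalso; apply n2, hf; exists k; reflexivity.
Qed.

Lemma Gamma_mex G : Acc opt_rel G -> is_mex (fun k => Gamma0 (gopt G k)) (Gamma0 G).
Proof. move=> h; rewrite (Gamma_eq _ h); apply mex_spec. Qed.

Lemma opt_neq {X Y} : Acc opt_rel X -> is_option X Y -> ~ oeq (Gamma0 Y) (Gamma0 X).
Proof. move=> h [p <-]; exact (proj1 (Gamma_mex _ h) p). Qed.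

Lemma opt_below {X b} : Acc opt_rel X -> olt b (Gamma0 X) -> exists p, oeq (Gamma0 (gopt X p)) b.
Proof. move=> h hb; exact (proj2 (Gamma_mex _ h) b hb). Qed.

Lemma term_acc G : terminating G -> Acc opt_rel G.
Proof.
intro T. apply NNPP; intro nA. apply T.
have step : forall X : {Y | ~ Acc opt_rel Y}, {Z : {Y | ~ Acc opt_rel Y} | is_option (proj1_sig X) (proj1_sig Z)}.
{ intros [X nX]. apply constructive_indefinite_description.
  apply NNPP; intro hn. apply nX. constructor. intros Y hY. apply NNPP; intro nY. apply hn.
  exists (exist _ Y nY). exact hY. }
pose nx := fun X => proj1_sig (step X).
exists (fun n => proj1_sig (iter n nx (exist _ G nA))). split; [reflexivity|].
intro n. exact (proj2_sig (step _)).
Qed.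

Definition upd {disp : Order.disp_t} {S : porderType disp} (K : S -> game) (j : S) (y : game) : S -> game :=
  fun l => if (j < l)%O then gzero else if l == j then y else K l.

Definition agree {disp : Order.disp_t} {S : porderType disp} (i0 : S) (K L : S -> game) : Prop :=
  (forall i, i != i0 -> game_eq (K i) (L i)) /\ oeq (Gamma0 (K i0)) (Gamma0 (L i0)).

Lemma gopt_join {disp : Order.disp_t} {S : porderType disp} {K : S -> game} {j k} :
  gopt (ojoin K) (existT _ j k) = ojoin (upd K j (gopt (K j) k)).
Proof. reflexivity. Qed.

Lemma is_opt_join {disp : Order.disp_t} {S : porderType disp} {K : S -> game} {j y} (e : K j = y) (m : gidx y) :
  is_option (ojoin K) (ojoin (upd K j (gopt y m))).
Proof. subst y. exists (existT _ j m). reflexivity. Qed.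

Lemma game_eq_sym : forall G H, game_eq G H -> game_eq H G.
Proof.
cofix CIH. intros G H [h1 h2]. constructor.
- intros l; destruct (h2 l) as [k hk]; exists k; apply CIH, hk.
- intros k; destruct (h1 k) as [l hl]; exists l; apply CIH, hl.
Qed.

Lemma game_eq_zero : game_eq gzero gzero.
Proof. constructor; intros []. Qed.

Lemma agree_sym {disp : Order.disp_t} {S : porderType disp} {i0 : S} {K L} :
  agree i0 K L -> agree i0 L K.
Proof.
move=> [h1 h2]; split; [move=> i hi; apply game_eq_sym, h1, hi| apply oeq_sym, h2].
Qed.

Lemma upd_same {disp : Order.disp_t} {S : porderType disp} {K : S -> game} {j y} : upd K j y j = y.
Proof. by rewrite /upd ltxx eqxx. Qed.

Lemma upd_other {disp : Order.disp_t} {S : porderType disp} {i0 : S} (Hmax : forall j : S, ~~ (i0 < j)%O)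
  {K : S -> game} {y i} : i != i0 -> upd K i0 y i = K i.
Proof. move=> hi; by rewrite /upd (negbTE (Hmax i)) (negbTE hi). Qed.

Lemma agree_upd {disp : Order.disp_t} {S : porderType disp} {i0 : S} {K L j y z} :
  agree i0 K L -> j != i0 -> game_eq y z -> agree i0 (upd K j y) (upd L j z).
Proof.
move=> [h1 h2] hj hyz; split.
- move=> i hi; rewrite /upd; case: (j < i)%O; first exact game_eq_zero.
  case: (i == j); [exact hyz| exact (h1 i hi)].
- rewrite /upd; case: (j < i0)%O; first exact (oeq_refl _).
  by rewrite eq_sym (negbTE hj).
Qed.

Lemma agree_upd0 {disp : Order.disp_t} {S : porderType disp} {i0 : S} (Hmax : forall j : S, ~~ (i0 < j)%O) {K L y z} :
  agree i0 K L -> oeq (Gamma0 y) (Gamma0 z) -> agree i0 (upd K i0 y) (upd L i0 z).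
Proof.
move=> [h1 h2] hyz; split.
- move=> i hi; rewrite !(upd_other Hmax) //; exact (h1 i hi).
- by rewrite !upd_same.
Qed.

Lemma acc_comp {disp : Order.disp_t} {S : porderType disp} (i0 : S) :
 forall X, Acc opt_rel X -> forall G : S -> game, X = ojoin G -> Acc opt_rel (G i0).
Proof.
intros X hX; induction hX as [X _ IH]; intros G ->.
constructor; intros y [k <-].
have := IH _ (ex_intro _ (existT _ i0 k) erefl) (upd G i0 (gopt (G i0) k)) erefl.
by rewrite upd_same.
Qed.

Lemma acc_opt {X Y} : Acc opt_rel X -> is_option X Y -> Acc opt_rel Y.
Proof. move=> [h] hy; exact (h Y hy). Qed.

Notation ct := (clos_trans game opt_rel).

Lemma opt_of {disp : Order.disp_t} {S : porderType disp} (K : S -> game) j k :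
  is_option (ojoin K) (ojoin (upd K j (gopt (K j) k))).
Proof. exists (existT _ j k). reflexivity. Qed.

Lemma opt_step {disp : Order.disp_t} {S : porderType disp} (K : S -> game) j k :
  ct (ojoin (upd K j (gopt (K j) k))) (ojoin K).
Proof. apply t_step, opt_of. Qed.


Lemma key {disp : Order.disp_t} {S : porderType disp} (i0 : S) (Hmax : forall j : S, ~~ (i0 < j)%O)
  (K L : S -> game) :
  Acc opt_rel (ojoin K) -> Acc opt_rel (ojoin L) -> agree i0 K L ->
  (forall K' L', ct (ojoin K') (ojoin K) -> ct (ojoin L') (ojoin L) -> agree i0 K' L' ->
     oeq (Gamma0 (ojoin K')) (Gamma0 (ojoin L'))) ->
  (forall K', ct (ojoin K') (ojoin K) -> agree i0 K' L ->
     oeq (Gamma0 (ojoin K')) (Gamma0 (ojoin L))) ->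
  ~ olt (Gamma0 (ojoin L)) (Gamma0 (ojoin K)).
Proof.
move=> aK aL hag IH1 IH2 hlt.
destruct (opt_below aK hlt) as [[j k] hp]. rewrite gopt_join in hp.
have accK0 := acc_comp i0 _ aK K erefl.
have accL0 := acc_comp i0 _ aL L erefl.
case: (eqVneq j i0) => [ej|hj].
- subst j. set x := gopt (K i0) k in hp.
  have optx : is_option (K i0) x by exists k.
  destruct (ocmp (Gamma0 x) (Gamma0 (K i0))) as [h|[h|h]].
  + have h' : olt (Gamma0 x) (Gamma0 (L i0)) by eapply olt_oeq; [exact h| exact (proj2 hag)].
    destruct (opt_below accL0 h') as [l hl].
    have := IH1 (upd K i0 x) (upd L i0 (gopt (L i0) l)).
    move=> /(_ (opt_step K i0 k))
           /(_ (opt_step L i0 l)).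
    move=> /(_ (agree_upd0 Hmax hag (oeq_sym hl))) e1.
    apply: (opt_neq aL (opt_of L i0 l)).
    exact (oeq_trans (oeq_sym e1) hp).
  + exact (opt_neq accK0 optx h).
  + have accx := acc_opt accK0 optx.
    destruct (opt_below accx h) as [m hm].
    have ex : upd K i0 x i0 = x by rewrite upd_same.
    have o2 := is_opt_join ex m.
    have o1 : is_option (ojoin K) (ojoin (upd K i0 x)) by exists (existT _ i0 k).
    have ag : agree i0 (upd (upd K i0 x) i0 (gopt x m)) L.
    { split.
      - move=> i hi; rewrite !(upd_other Hmax) //; exact (proj1 hag i hi).
      - rewrite upd_same; exact (oeq_trans hm (proj2 hag)). }
    have e2 := IH2 _ (t_trans game opt_rel _ _ _ (t_step game opt_rel _ _ o2) (t_step game opt_rel _ _ o1)) ag.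
    apply: (opt_neq (acc_opt aK o1) o2).
    exact (oeq_trans e2 (oeq_sym hp)).
- destruct (proj1 hag j hj) as [m1 m2]. destruct (m1 k) as [l hl].
  have := IH1 (upd K j (gopt (K j) k)) (upd L j (gopt (L j) l)).
  move=> /(_ (opt_step K j k))
         /(_ (opt_step L j l)).
  move=> /(_ (agree_upd hag hj hl)) e1.
  apply: (opt_neq aL (opt_of L j l)).
  exact (oeq_trans (oeq_sym e1) hp).
Qed.

Lemma ct_acc {X} : Acc ct X -> Acc opt_rel X.
Proof. apply Acc_incl. intros a b h. by apply t_step. Qed.

Lemma main_ind {disp : Order.disp_t} {S : porderType disp} (i0 : S) (Hmax : forall j : S, ~~ (i0 < j)%O) :
  forall X, Acc ct X -> forall G : S -> game, X = ojoin G ->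
  forall Y, Acc ct Y -> forall H : S -> game, Y = ojoin H -> agree i0 G H ->
  oeq (Gamma0 (ojoin G)) (Gamma0 (ojoin H)).
Proof.
intros X hX; induction hX as [X hXs IHX]; intros G -> Y hY.
induction hY as [Y hYs IHY]; intros H -> hag.
have accA := ct_acc (Acc_intro _ hXs).
have accB := ct_acc (Acc_intro _ hYs).
destruct (ocmp (Gamma0 (ojoin G)) (Gamma0 (ojoin H))) as [h|[h|h]]; [exfalso|exact h|exfalso].
- apply: (key i0 Hmax H G accB accA (agree_sym hag) _ _ h).
  + move=> K' L' c1 c2 ag. apply: oeq_sym.
    exact (IHX _ c2 L' erefl _ (hYs _ c1) K' erefl (agree_sym ag)).
  + move=> K' c1 ag. apply: oeq_sym. exact (IHY _ c1 K' erefl (agree_sym ag)).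
- apply: (key i0 Hmax G H accA accB hag _ _ h).
  + move=> K' L' c1 c2 ag. exact (IHX _ c1 K' erefl _ (hYs _ c2) L' erefl ag).
  + move=> K' c1 ag. exact (IHX _ c1 K' erefl _ (Acc_intro _ hYs) H erefl ag).
Qed.

Theorem mainTheorem3 (disp : Order.disp_t) (S : porderType disp)
  (G H : S -> game) (i0 : S) :
  terminating (ojoin G) -> terminating (ojoin H) ->
  (forall j : S, ~~ (i0 < j)%O) ->
  (forall i : S, i != i0 -> game_eq (G i) (H i)) ->
  zero_equiv (G i0) (H i0) ->
  zero_equiv (ojoin G) (ojoin H).
Proof.
move=> tG tH Hmax hG hz.
apply: (main_ind i0 Hmax _ (Acc_clos_trans _ _ _ (term_acc _ tG)) G erefl
                     _ (Acc_clos_trans _ _ _ (term_acc _ tH)) H erefl).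
split; [exact hG| exact hz].
Qed.
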